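(* Let $R$ be a $\star$-ring. The following are equivalent: (1) $R$ is weakly $\star$-clean and $2\in U(R)$; (2) every element $a\in R$ can be written either as $a=u+x$ with $u\in U(R)$ and $x^2=1$, $x^\star=x$, or as $a=u+(2p+1)$ with $u\in U(R)$ and $p^2=p=p^\star$.
   Context: Rings are associative with identity. A $\star$-ring is a ring with a map $\star:R\to R$ satisfying $(x+y)^\star=x^\star+y^\star$, $(xy)^\star=y^\star x^\star$, $(x^\star)^\star=x$. A projection is $p$ with $p^2=p=p^\star$; $P(R)$ is the set of projections and $U(R)$ the units. An element $x$ is weakly $\star$-clean if $x=u+p$ or $x=u-p$ with $u\in U(R)$, $p\in P(R)$; $R$ is weakly $\star$-clean if all its elements are. *)

(* Defs.v *)
From HB Require Import structures.
From mathcomp Require Import all_boot all_order all_algebra.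
Set Implicit Arguments. Unset Strict Implicit. Unset Printing Implicit Defensive.
Import GRing.Theory.
Local Open Scope ring_scope.

Definition is_star (R : pzRingType) (star : R -> R) : Prop :=
  (forall x y : R, star (x + y) = star x + star y) /\
  (forall x y : R, star (x * y) = star y * star x) /\
  (forall x : R, star (star x) = x).

Definition is_unit (R : pzRingType) (u : R) : Prop :=
  exists v : R, u * v = 1 /\ v * u = 1.

Definition is_projection (R : pzRingType) (star : R -> R) (p : R) : Prop :=
  p * p = p /\ star p = p.

Definition weakly_star_clean_elt (R : pzRingType) (star : R -> R) (x : R) : Prop :=
  exists u p : R, is_unit u /\ is_projection star p /\ (x = u + p \/ x = u - p).

Definition weakly_star_clean (R : pzRingType) (star : R -> R) : Prop :=
  forall x : R, weakly_star_clean_elt star x.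

(* Main.v *)
Require Import Defs.
From mathcomp Require Import all_boot all_order all_algebra.
Import GRing.Theory.
Local Open Scope ring_scope.

Section Aux.
Set Implicit Arguments.
Variable R : pzRingType.

Lemma comm2 (x : R) : 2%:R * x = x * 2%:R.
Proof. by rewrite mulr_natl mulr_natr. Qed.

Lemma sq12 (p : R) : p * p = p -> (1 - 2%:R * p) * (1 - 2%:R * p) = 1.
Proof.
move=> hp; rewrite mulr_natl mulr2n !mulrBl !mulrBr !mulrDl !mulrDr !mulr1 !mul1r hp.
set q := p + p.
have -> : q - (q + q) = - q by rewrite opprD addrA subrr add0r.
by rewrite opprK subrK.
Qed.

Variable w : R.
Hypothesis w2 : w * 2%:R = 1.
Hypothesis tw : 2%:R * w = 1.

Lemma wc (x : R) : w * x = x * w.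
Proof.
have -> : w * x = w * x * (2%:R * w) by rewrite tw mulr1.
by rewrite mulrA -(mulrA w x) -comm2 mulrA w2 mul1r.
Qed.

Lemma half (y : R) : 2%:R * (y * w) = y.
Proof. by rewrite mulrA comm2 -mulrA tw mulr1. Qed.

Lemma cancel2 (a b : R) : 2%:R * a = 2%:R * b -> a = b.
Proof. by move=> h; rewrite -[a]mul1r -[b]mul1r -w2 -!mulrA h. Qed.

Lemma unit_mulw (u : R) : is_unit u -> is_unit (u * w).
Proof.
case=> v [h1 h2]; exists (2%:R * v); split.
  by rewrite mulrA -(mulrA u) w2 mulr1.
by rewrite mulrA -(mulrA 2%:R v u) h2 mulr1 tw.
Qed.

Lemma unit_mul2 (u : R) : is_unit u -> is_unit (2%:R * u).
Proof.
case=> v [h1 h2]; exists (v * w); split.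
  by rewrite mulrA -(mulrA 2%:R u v) h1 mulr1 tw.
by rewrite mulrA -(mulrA v w) w2 mulr1 h2.
Qed.

Variable star : R -> R.
Hypothesis hstar : is_star star.

Lemma star0 : star 0 = 0.
Proof.
case: hstar => hD _.
have h := hD 0 0; rewrite addr0 in h.
have e := addrK (star 0) (star 0); rewrite -h subrr in e.
by rewrite -e.
Qed.

Lemma starN (x : R) : star (- x) = - star x.
Proof.
case: hstar => hD _; apply/eqP; rewrite -subr_eq0 opprK -hD.
by rewrite addNr star0.
Qed.

Lemma starB (x y : R) : star (x - y) = star x - star y.
Proof. by case: hstar => hD _; rewrite hD starN. Qed.

Lemma star1 : star 1 = 1.
Proof.
case: hstar => _ [hM hI].
by rewrite -[1 in RHS](hI 1) -[star 1 in RHS]mulr1 hM hI mulr1.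
Qed.

Lemma star2 : star 2%:R = 2%:R.
Proof. by case: hstar => hD _; rewrite -[2%:R]/(1 + 1 : R) hD star1. Qed.

Lemma star2p (p : R) : star p = p -> star (2%:R * p) = 2%:R * p.
Proof. by case: hstar => _ [hM _] hp; rewrite hM hp star2 comm2. Qed.

Lemma starw : star w = w.
Proof.
case: hstar => _ [hM _].
have h1 : star w * 2%:R = 1 by rewrite -star2 -hM tw star1.
by rewrite -[star w]mulr1 -tw mulrA h1 mul1r.
Qed.

Lemma proj_of_inv (x : R) : x * x = 1 -> star x = x ->
  exists q, q * q = q /\ star q = q /\ 2%:R * q = 1 - x.
Proof.
move=> hx sx; exists ((1 - x) * w); split; last split; last by rewrite half.
- have hy : (1 - x) * (1 - x) = 2%:R * (1 - x).
    rewrite !mulrBl !mulrBr !mulr1 !mul1r hx mulr_natl mulr2n.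
    by rewrite opprB addrA mulr2n opprD addrA (addrAC 1 (-x) 1).
  set y := 1 - x in hy *.
  by rewrite !mulrA -(mulrA y w y) wc !mulrA hy comm2 -(mulrA y 2%:R w) tw mulr1.
- case: hstar => _ [hM _].
  by rewrite hM starw starB star1 sx wc.
Qed.

End Aux.
Arguments half {R w} tw y.
Arguments cancel2 {R w} w2 a b _.
Arguments unit_mulw {R w} w2 tw {u} _.
Arguments unit_mul2 {R w} w2 tw {u} _.
Arguments proj_of_inv {R w} w2 tw {star} hstar x _ _.

Theorem theorem4p7 (R : pzRingType) (star : R -> R) (hstar : is_star star) :
  (weakly_star_clean star /\ is_unit (2%:R : R)) <->
  (forall a : R,
     (exists u x : R, is_unit u /\ x * x = 1 /\ star x = x /\ a = u + x) \/
     (exists u p : R, is_unit u /\ p * p = p /\ star p = p /\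
                      a = u + (2%:R * p + 1))).
Proof.
split.
- case=> hwc [w [tw w2]] a.
  have hb := half tw (a - 1).
  case: (hwc ((a - 1) * w)) => v [p [hv [[pp sp] [hb1|hb1]]]];
    rewrite hb1 in hb.
  + right; exists (2%:R * v), p; do !split => //; first exact: (unit_mul2 w2 tw).
    by rewrite addrA -mulrDr hb subrK.
  + left; exists (2%:R * v), (1 - 2%:R * p); do !split => //.
    * exact: (unit_mul2 w2 tw).
    * exact: sq12.
    * by rewrite starB // star1 // star2p.
    * by rewrite (addrC 1) addrA -mulrBr hb subrK.
- move=> h.
  have [w [tw w2]] : is_unit (2%:R : R).
    case: (h 1) => [[u [x [[v [uv vu]] [xx [_ e]]]]] | [u [p [[v [uv vu]] [pp [_ e]]]]]].
    + have hu : u = 1 - x by rewrite e addrK.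
      have ex : x = - 1.
        have z : (1 - x) * (1 + x) = 0.
          by rewrite mulrBl !mulrDr !mulr1 !mul1r xx opprD addrA addrK subrr.
        apply/eqP; rewrite -subr_eq0 opprK addrC.
        have -> : 1 + x = v * u * (1 + x) by rewrite vu mul1r.
        by rewrite hu -mulrA z mulr0.
      have hu2 : u = 2%:R by rewrite hu ex opprK.
      by exists v; rewrite -hu2.
    + have h0 : u + 2%:R * p = 0 by apply: (addIr 1); rewrite -addrA -e add0r.
      have hu : u = - (2%:R * p) by apply/eqP; rewrite -addr_eq0 h0.
      have pinv : p * (- (2%:R * v)) = 1.
        by rewrite mulrN mulrA -comm2 -mulNr -hu.
      have p1 : p = 1 by rewrite -[LHS]mulr1 -pinv mulrA pp.
      rewrite p1 mulr1 in hu.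
      exists (- v); split.
      * by rewrite mulrN -mulNr -hu.
      * by rewrite mulNr -mulrN -hu.
  split; last by exists w.
  move=> a.
  case: (h (2%:R * a + 1)) => [[u [x [hu [xx [sx e]]]]] | [u [p [hu [pp [sp e]]]]]].
  + have [q [qq [sq hq]]] := proj_of_inv w2 tw hstar x xx sx.
    exists (u * w), q; do !split => //; first exact: (unit_mulw w2 tw).
    right; apply: (cancel2 w2); rewrite mulrBr half // hq.
    by apply: (addIr 1); rewrite e opprB addrA subrK.
  + exists (u * w), p; do !split => //; first exact: (unit_mulw w2 tw).
    left; apply: (cancel2 w2); rewrite mulrDr half //.
    by apply: (addIr 1); rewrite e addrA.
Qed.
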